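(* For all integers $m\ge2$, $n\ge2$ there exists a proportional mechanism $(A,p)$ for the job scheduling problem over the set $\mathcal{N}$ of normalized instances with $m$ machines and $n$ jobs such that $\max_{i\in[m]}c_i(A(c)_i)=\mathrm{OPT}(c)$ for every $c\in\mathcal{N}$.
   Context: Notation: $[k]=\{1,\dots,k\}$. An instance is a matrix $c\in\mathbb{R}_{\ge0}^{m\times n}$; for $S\subseteq[n]$, $c_i(S)=\sum_{j\in S}c_{i,j}$. The set of normalized instances is $\mathcal{N}=\{c\in\mathbb{R}_{\ge0}^{m\times n}: \exists C \text{ with } c_i([n])=C\text{ for all } i\in[m]\}$. An allocation is a tuple $(X_1,\dots,X_m)$ of pairwise disjoint subsets of $[n]$ whose union is $[n]$. A mechanism $(A,p)$ over a set of instances $\mathcal{I}$ assigns to each $c\in\mathcal{I}$ an allocation $A(c)$ and payments $p(c)\in\mathbb{R}^m$ (written $A_i,p_i$). It is proportional if for every $c\in\mathcal{I}$ and $i\in[m]$: $c_i(A_i)-p_i\le\frac1m\sum_{j\in[m]}(c_i(A_j)-p_j)$. $\mathrm{OPT}(c)=\min_X\max_{i\in[m]}c_i(X_i)$ over all allocations $X$. *)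

(* Defs.v *)
From HB Require Import structures.
From mathcomp Require Import all_boot all_order all_algebra.
From mathcomp Require Import reals.
Set Implicit Arguments. Unset Strict Implicit. Unset Printing Implicit Defensive.
Import Order.TTheory GRing.Theory Num.Theory.
Local Open Scope ring_scope.

(* Instances: c : 'M[R]_(m,n), entry c i j = cost of job j on machine i. *)
Definition cost (R : realType) (m n : nat) (c : 'M[R]_(m, n)) (i : 'I_m)
  (S : {set 'I_n}) : R := \sum_(j in S) c i j.

Definition normalized (R : realType) (m n : nat) (c : 'M[R]_(m, n)) : Prop :=
  (forall i j, 0 <= c i j) /\
  exists C : R, forall i, cost c i [set: 'I_n] = C.

Definition allocation (m n : nat) (X : {ffun 'I_m -> {set 'I_n}}) : bool :=
  [forall i, forall k, (i != k) ==> [disjoint X i & X k]] &&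
  (\bigcup_(i < m) X i == [set: 'I_n]).

Definition makespan (R : realType) (m n : nat) (c : 'M[R]_(m, n))
  (X : {ffun 'I_m -> {set 'I_n}}) : R :=
  \big[Num.max/0]_(i < m) cost c i (X i).

(* The set of allocations
   is finite and (for m >= 1) nonempty; we express the minimum as the value
   attained by some allocation that is <= all others. *)
Definition is_OPT (R : realType) (m n : nat) (c : 'M[R]_(m, n)) (v : R) : Prop :=
  (exists X, allocation X /\ makespan c X = v) /\
  (forall X, allocation X -> v <= makespan c X).

Definition proportional (R : realType) (m n : nat)
  (I : 'M[R]_(m, n) -> Prop)
  (A : 'M[R]_(m, n) -> {ffun 'I_m -> {set 'I_n}})
  (p : 'M[R]_(m, n) -> 'I_m -> R) : Prop :=
  forall c, I c -> forall i : 'I_m,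
    cost c i (A c i) - p c i <=
    m%:R^-1 * \sum_(k < m) (cost c i (A c k) - p c k).

(* Main.v *)
Require Import Defs.
From HB Require Import structures.
From mathcomp Require Import all_boot all_order all_algebra.
From mathcomp Require Import reals.
From Stdlib Require Import Classical ClassicalEpsilon.
Import Order.TTheory GRing.Theory Num.Theory.
Local Open Scope ring_scope.

Lemma cycle_ex (m : nat) (f : 'I_m -> 'I_m) (x0 : 'I_m) :
  exists x (k : nat), (0 < k)%N /\ iter k f x = x.
Proof.
pose g (t : 'I_m.+1) := iter t f x0.
have ng : ~ injective g.
  move=> /leq_card; rewrite !card_ord ltnn //.
have [a [b [gab nab]]] : exists a b, g a = g b /\ a <> b.
  apply: NNPP => H; apply: ng => a b gab.
  apply: NNPP => nab; apply: H; by exists a, b.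
wlog lab : a b gab nab / (a < b)%N.
  move=> W; case: (ltngtP a b) => h; first exact: (W a b).
  - exact: (W b a (esym gab) (fun e => nab (esym e))).
  - by case: nab; apply: val_inj.
exists (iter a f x0), (b - a)%N; split; first by rewrite subn_gt0.
by rewrite -iterD subnK ?(ltnW lab) //; rewrite /g in gab; rewrite gab.
Qed.
Lemma cyc_props (m : nat) (f : 'I_m -> 'I_m) (x : 'I_m) (k : nat) :
  (0 < k)%N -> iter k f x = x ->
  let Cy := [set iter (nat_of_ord t) f x | t : 'I_k] in
  x \in Cy /\ (forall i, i \in Cy -> f i \in Cy) /\ {in Cy &, injective f}.
Proof.
move=> k0 hk Cy.
have xC : x \in Cy by apply/imsetP; exists (Ordinal k0).
have stab : forall i, i \in Cy -> f i \in Cy.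
  move=> i /imsetP [t _ ->]; rewrite -iterS.
  case: (ltnP t.+1 k) => h; first by apply/imsetP; exists (Ordinal h).
  have -> : t.+1 = k by apply/eqP; rewrite eqn_leq h ltn_ord.
  by rewrite hk.
split => //; split => //.
apply/imset_injP; rewrite eqn_leq; apply/andP; split.
  apply: subset_leq_card; apply/subsetP => y /imsetP [i iC ->]; exact: stab.
apply: subset_leq_card; apply/subsetP => y /imsetP [t _ ->].
case: (posnP t) => [t0|tp].
  have hk1 : (k.-1 < k)%N by rewrite prednK.
  apply/imsetP; exists (iter k.-1 f x); first by apply/imsetP; exists (Ordinal hk1).
  by rewrite t0 /= -iterS prednK // hk.
have ht : (t.-1 < k)%N by rewrite (leq_ltn_trans (leq_pred t)).
apply/imsetP; exists (iter t.-1 f x); first by apply/imsetP; exists (Ordinal ht).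
by rewrite -iterS prednK.
Qed.
Lemma alloc_sum (R : realType) (m n : nat) (c : 'M[R]_(m, n)) (X : {ffun 'I_m -> {set 'I_n}}) i :
  allocation X -> \sum_k cost c i (X k) = cost c i [set: 'I_n].
Proof.
case/andP => /forallP hd /eqP hc.
rewrite /cost -hc partition_disjoint_bigcup //.
by move=> a b ab; move: (hd a) => /forallP /(_ b) /implyP; apply.
Qed.

Lemma improve (R : realType) (m n : nat) (c : 'M[R]_(m, n)) (X : {ffun 'I_m -> {set 'I_n}})
  (f : 'I_m -> 'I_m) (i0 : 'I_m) :
  allocation X ->
  (forall i, cost c i (X (f i)) < cost c (f i) (X (f i))) ->
  exists Y, allocation Y /\ makespan c Y <= makespan c X /\
    \sum_i cost c i (Y i) < \sum_i cost c i (X i).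
Proof.
move=> hX Hf.
have [x [k [k0 hk]]] := @cycle_ex _ f i0.
have [xC [stab finj]] := @cyc_props _ f x k k0 hk.
set Cy := [set iter (nat_of_ord t) f x | t : 'I_k] in xC stab finj.
pose s i := if i \in Cy then f i else i.
have sinj : injective s.
  move=> a b; rewrite /s.
  case: ifP => aC; case: ifP => bC.
  - exact: finj.
  - by move=> e; move: (stab _ aC); rewrite e bC.
  - by move=> e; move: (stab _ bC); rewrite -e aC.
  - done.
pose Y := [ffun i => X (s i)].
exists Y; split.
  case/andP: hX => /forallP hd /eqP hc.
  apply/andP; split.
    apply/forallP => a; apply/forallP => b; apply/implyP => ab.
    rewrite !ffunE.
    have sab : s a != s b by apply: contra ab => /eqP /sinj ->.
    by move: (hd (s a)) => /forallP /(_ (s b)) /implyP; apply.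
  apply/eqP; rewrite -hc.
  under eq_bigr do rewrite ffunE.
  by rewrite [RHS](reindex_inj sinj).
split.
  rewrite /makespan; apply: bigmax_le; first exact: bigmax_ge_id.
  move=> i _; rewrite ffunE /s; case: ifP => iC.
    apply: le_trans (ltW (Hf i)) _; exact: (le_bigmax 0 (fun j => cost c j (X j)) (f i)).
  exact: (le_bigmax 0 (fun j => cost c j (X j)) i).
have fC : [set f i | i in Cy] = Cy.
  apply/eqP; rewrite eqEcard; apply/andP; split.
    by apply/subsetP => y /imsetP [i iC ->]; apply: stab.
  by rewrite (eqP (introT imset_injP finj)).
rewrite [X in _ < X](bigID (fun i => i \in Cy)) [X in X < _](bigID (fun i => i \in Cy)) /=.
have -> : \sum_(i | i \notin Cy) cost c i (Y i) = \sum_(i | i \notin Cy) cost c i (X i).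
  by apply: eq_bigr => i iC; rewrite ffunE /s (negbTE iC).
rewrite ltrD2r.
have -> : \sum_(i | i \in Cy) cost c i (X i) = \sum_(i in Cy) cost c (f i) (X (f i)).
  rewrite -[in LHS]fC big_imset //.
apply: ltr_sum.
  by apply/hasP; exists x; [rewrite mem_index_enum|].
move=> i iC; rewrite ffunE /s iC; exact: Hf.
Qed.
Lemma good (R : realType) (m n : nat) (c : 'M[R]_(m, n)) (i0 : 'I_m) :
  normalized c -> exists X : {ffun 'I_m -> {set 'I_n}},
    allocation X /\ is_OPT c (makespan c X) /\
    \sum_i cost c i (X i) <= cost c i0 [set: 'I_n].
Proof.
move=> [c0 [C hC]].
pose X0 : {ffun 'I_m -> {set 'I_n}} := [ffun i => if i == i0 then [set: 'I_n] else set0].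
have aX0 : allocation X0.
  apply/andP; split.
    apply/forallP => a; apply/forallP => b; apply/implyP => ab; rewrite !ffunE.
    case: (eqVneq a i0) => [ea|na].
      have nb : b != i0 by rewrite -ea eq_sym.
      by rewrite (negbTE nb) disjoint_sym disjoints_subset sub0set.
    by rewrite disjoints_subset sub0set.
  rewrite eqEsubset subsetT /=; apply/subsetP => j _.
  by apply/bigcupP; exists i0 => //; rewrite ffunE eqxx.
pose Xo := [arg min_(X < X0 | allocation X) makespan c X]%O.
have [aXo minXo] : allocation Xo /\ forall Y, allocation Y -> makespan c Xo <= makespan c Y.
  by rewrite /Xo; case: arg_minP => // X aX mX; split => // Y aY; apply: mX.
pose Xb := [arg min_(X < Xo | allocation X && (makespan c X == makespan c Xo))
              \sum_i cost c i (X i)]%O.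
have [aXb mXb minXb] : [/\ allocation Xb, makespan c Xb = makespan c Xo &
   forall Y, allocation Y -> makespan c Y = makespan c Xo ->
      \sum_i cost c i (Xb i) <= \sum_i cost c i (Y i)].
  rewrite /Xb; case: arg_minP; first by rewrite aXo eqxx.
  move=> X /andP [aX /eqP mX] H; split => // Y aY mY; apply: H.
  by rewrite aY mY eqxx.
exists Xb; split => //; split.
  split; first by exists Xo.
  by move=> Y aY; rewrite mXb; apply: minXo.
case: (boolP [exists i, [forall k, cost c k (Xb k) <= cost c i (Xb k)]]).
  case/existsP => i /forallP hi.
  rewrite hC -(hC i) -(@alloc_sum _ _ _ c Xb i aXb).
  by apply: ler_sum => k _; apply: hi.
rewrite negb_exists => /forallP hn.
have hf : forall i, exists k, cost c i (Xb k) < cost c k (Xb k).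
  move=> i; move: (hn i); rewrite negb_forall => /existsP [k hk].
  by exists k; rewrite ltNge.
pose f i := odflt i [pick k | cost c i (Xb k) < cost c k (Xb k)].
have Hf : forall i, cost c i (Xb (f i)) < cost c (f i) (Xb (f i)).
  move=> i; rewrite /f; case: pickP => [k //|H].
  by have [k hk] := hf i; move: (H k); rewrite hk.
have [Y [aY [mY sY]]] := @improve _ _ _ c Xb f i0 aXb Hf.
have mY' : makespan c Y = makespan c Xo.
  by apply/eqP; rewrite eq_le -mXb mY /= mXb minXo.
by move: (minXb Y aY mY'); rewrite leNgt sY.
Qed.

Theorem theorem3 (R : realType) (m n : nat) (hm : (2 <= m)%N) (hn : (2 <= n)%N) :
  exists (A : 'M[R]_(m, n) -> {ffun 'I_m -> {set 'I_n}})
         (p : 'M[R]_(m, n) -> 'I_m -> R),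
    (forall c, normalized c -> allocation (A c)) /\
    proportional (@normalized R m n) A p /\
    (forall c, normalized c -> is_OPT c (makespan c (A c))).
Proof.
have hm0 : (0 < m)%N by apply: leq_trans hm.
pose i0 : 'I_m := Ordinal hm0.
pose P (c : 'M[R]_(m, n)) (X : {ffun 'I_m -> {set 'I_n}}) :=
  normalized c -> allocation X /\ is_OPT c (makespan c X) /\
    \sum_i cost c i (X i) <= cost c i0 [set: 'I_n].
have exP : forall c, exists X, P c X.
  move=> c; case: (classic (normalized c)) => hc.
    have [X HX] := @good _ _ _ c i0 hc; by exists X.
  by exists [ffun => set0].
pose A c := proj1_sig (constructive_indefinite_description _ (exP c)).
have HA : forall c, P c (A c).
  move=> c; rewrite /A; exact: proj2_sig (constructive_indefinite_description _ (exP c)).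
exists A, (fun c i => cost c i (A c i)); split; last split.
- by move=> c hc; case: (HA c hc).
- move=> c hc i; have [aA [_ sA]] := HA c hc.
  rewrite subrr sumrB (@alloc_sum _ _ _ c (A c) i aA).
  case: hc => _ [C hC]; rewrite hC -(hC i0).
  by apply: mulr_ge0; rewrite ?invr_ge0 ?ler0n // subr_ge0.
- by move=> c hc; have [_ [h _]] := HA c hc.
Qed.
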